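(* Let $\mathbb{R}^n_s$ be $\mathbb{R}^n$ with a non-degenerate symmetric bilinear form of signature $(n-s,s)$, and let $G\subset\mathrm{Iso}(\mathbb{R}^n_s)$ be a real Zariski-closed subgroup whose centralizer in $\mathrm{Iso}(\mathbb{R}^n_s)$ acts transitively on $\mathbb{R}^n$. Then the action of $G$ on $\mathbb{R}^n$ is principal.
   Context: The action of $G$ on $\mathbb{R}^n$ is free. A free action of an algebraic group $G$ on an affine variety $V$ is principal if the map $G\times V\to V\times V$, $(g,x)\mapsto(g.x,x)$ is an algebraic isomorphism onto its image; equivalently, the map $\beta(y,x)=g_{yx}$, where $g_{yx}\in G$ is the unique element with $g_{yx}.x=y$, defined on the graph $\{(g.x,x)\}$ of the action, is a morphism. *)

(* Defs.v *)
From HB Require Import structures.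
From mathcomp Require Import all_boot all_order all_algebra.
From mathcomp Require Import reals.
From mathcomp Require Import mpoly.

Set Implicit Arguments. Unset Strict Implicit. Unset Printing Implicit Defensive.
Import Order.TTheory GRing.Theory Num.Theory.
Local Open Scope ring_scope.

Section Defs.
Variables (R : realType) (n s : nat).

Definition sigform : 'M[R]_n :=
  \matrix_(i < n, j < n) (if i == j then (if (i < n - s)%N then 1 else -1) else 0).

(* An affine map x |-> A x + b of R^n, represented by the pair (A, b). *)
Definition aff := ('M[R]_n * 'cV[R]_n)%type.

Definition act (g : aff) (x : 'cV[R]_n) : 'cV[R]_n := g.1 *m x + g.2.

Definition aff_comp (g h : aff) : aff := (g.1 *m h.1, g.1 *m h.2 + g.2).

Definition aff_id : aff := (1%:M, 0).

Definition isIso (g : aff) : Prop := g.1^T *m sigform *m g.1 = sigform.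

Definition aff_coords (g : aff) : 'I_(n * n + n) -> R :=
  fun k => match split k with
           | inl j => mxvec g.1 0 j
           | inr j => g.2 j 0
           end.

Definition pair_coords (y x : 'cV[R]_n) : 'I_(n + n) -> R :=
  fun k => match split k with
           | inl j => y j 0
           | inr j => x j 0
           end.

Definition is_subgroup_Iso (G : aff -> Prop) : Prop :=
  [/\ forall g, G g -> isIso g,
      G aff_id,
      forall g h, G g -> G h -> G (aff_comp g h) &
      forall g, G g -> exists2 h, G h & aff_comp g h = aff_id].

Definition zariski_closed (G : aff -> Prop) : Prop :=
  exists P : {mpoly R[n * n + n]} -> Prop,
    forall g, G g <-> forall p, P p -> p.@[aff_coords g] = 0.

Definition centralizer_transitive (G : aff -> Prop) : Prop :=
  forall x y : 'cV[R]_n, exists h, [/\ isIso h,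
      forall g, G g -> aff_comp h g = aff_comp g h &
      act h x = y].

Definition free_action (G : aff -> Prop) : Prop :=
  forall g x, G g -> act g x = x -> g = aff_id.

Definition regular_on (m : nat) (S : ('I_m -> R) -> Prop) (f : ('I_m -> R) -> R) :=
  exists p q : {mpoly R[m]},
    forall z, S z -> q.@[z] != 0 /\ f z = p.@[z] / q.@[z].

Definition principal_action (G : aff -> Prop) : Prop :=
  free_action G /\
  exists beta : ('I_(n + n) -> R) -> aff,
    (forall g x, G g -> beta (pair_coords (act g x) x) = g) /\
    let Gamma := fun z => exists g x, G g /\ z = pair_coords (act g x) x in
    (forall i j : 'I_n, regular_on Gamma (fun z => (beta z).1 i j)) /\
    (forall i : 'I_n, regular_on Gamma (fun z => (beta z).2 i 0)).

End Defs.

(* Main.v *)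
Require Import Defs.
From HB Require Import structures.
From mathcomp Require Import all_boot all_order all_algebra.
From mathcomp Require Import reals.
From mathcomp Require Import mpoly.
From Stdlib Require Import Classical.
From mathcomp Require Import zify ring.

Set Implicit Arguments. Unset Strict Implicit. Unset Printing Implicit Defensive.
Import Order.TTheory GRing.Theory Num.Theory.
Local Open Scope ring_scope.

Lemma split_l m p (j : 'I_m) : split (lshift p j) = inl j.
Proof. exact: (unsplitK (inl j)). Qed.
Lemma split_r m p (j : 'I_p) : split (rshift m j) = inr j.
Proof. exact: (unsplitK (inr j)). Qed.

Lemma max_exists (P : nat -> Prop) (N : nat) :
  P 0%N -> (forall k, P k -> (k <= N)%N) ->
  exists m, P m /\ forall k, P k -> (k <= m)%N.
Proof.
move=> P0 bnd.
suff H : forall t m0, P m0 -> (N - m0 <= t)%N -> exists m, P m /\ forall k, P k -> (k <= m)%N.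
  by apply: (H N 0%N P0); rewrite subn0.
elim=> [|t IH] m0 Pm0 hle.
  exists m0; split=> // k Pk; apply: leq_trans (bnd _ Pk) _.
  by rewrite -subn_eq0 -leqn0.
case: (classic (exists k, P k /\ (m0 < k)%N)) => [[k [Pk lt]]|nex].
  apply: (IH k Pk); have := bnd _ Pk; lia.
exists m0; split=> // k Pk; rewrite leqNgt; apply/negP => lt; apply: nex; by exists k.
Qed.

Section S.
Variables (R : realType) (n s : nat).
Local Notation aff := (aff R n).
Local Notation S := (sigform R n s).

Lemma act_comp (g h : aff) x : act (aff_comp g h) x = act g (act h x).
Proof. by rewrite /act /aff_comp /= mulmxDr mulmxA addrA. Qed.

Lemma sig_sq : S *m S = 1%:M.
Proof.
apply/matrixP=> i j; rewrite !mxE (bigD1 i) //= big1 => [|k nki]; last first.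
  by rewrite !mxE eq_sym (negbTE nki) mul0r.
rewrite !mxE eqxx addr0; case: eqP => [->|_]; last by rewrite mulr0.
by case: ifP => _; rewrite ?mulr1 ?mulrNN ?mulr1.
Qed.

Lemma iso_unit (C : 'M[R]_n) : C^T *m S *m C = S -> C \in unitmx.
Proof.
move=> h.
have : (S *m C^T *m S) *m C = 1%:M.
  have e : S *m C^T *m S *m C = S *m (C^T *m S *m C) by rewrite !mulmxA.
  by rewrite e h sig_sq.
by case/mulmx1_unit.
Qed.

Lemma cent_disp (G : aff -> Prop) : centralizer_transitive s G ->
  forall x : 'cV[R]_n, exists C : 'M[R]_n, C \in unitmx /\
    forall g, G g -> act g x - x = C *m g.2.
Proof.
move=> H x; have [h [hiso hcom hx]] := H 0 x.
exists h.1; split; first exact: iso_unit.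
move=> g Gg; have := congr1 snd (hcom g Gg); rewrite /aff_comp /= => e.
move: hx; rewrite /act mulmx0 add0r => hx; subst x.
by rewrite /act -e addrK.
Qed.

Definition Bm k (gs : 'I_k -> aff) : 'M[R]_(k, n) := \matrix_(i, j) (gs i).2 j 0.
Definition Qm k (gs : 'I_k -> aff) (x : 'cV[R]_n) : 'M[R]_(k, n) :=
  \matrix_(i, j) (act (gs i) x - x) j 0.

Lemma Qm_eq (G : aff -> Prop) k (gs : 'I_k -> aff) x (C : 'M[R]_n) :
  (forall g, G g -> act g x - x = C *m g.2) -> (forall i, G (gs i)) ->
  Qm gs x = Bm gs *m C^T.
Proof.
move=> hC hG; apply/matrixP=> i j; rewrite mxE hC // !mxE.
by apply: eq_bigr => l _; rewrite !mxE mulrC.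
Qed.

Lemma comb (G : aff -> Prop) k (gs : 'I_k -> aff) g (lam : 'rV[R]_k) :
  centralizer_transitive s G -> (forall i, G (gs i)) -> G g ->
  g.2^T = lam *m Bm gs -> forall x, (act g x - x)^T = lam *m Qm gs x.
Proof.
move=> hc hG Gg e x; have [C [_ hC]] := cent_disp hc x.
by rewrite (Qm_eq hC hG) hC // trmx_mul mulmxA e.
Qed.

Lemma Qm_free (G : aff -> Prop) k (gs : 'I_k -> aff) x :
  centralizer_transitive s G -> (forall i, G (gs i)) ->
  row_free (Bm gs) -> row_free (Qm gs x).
Proof.
move=> hc hG hf; have [C [Cu hC]] := cent_disp hc x.
rewrite (Qm_eq hC hG) /row_free mxrankMfree //.
by rewrite row_free_unit unitmx_tr.
Qed.

Lemma sq0 (w : 'rV[R]_n) : w *m w^T = 0 -> w = 0.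
Proof.
move=> hw; apply/rowP => j; rewrite [RHS]mxE.
have e : \sum_(l < n) w 0 l * w 0 l = 0.
  have := congr1 (fun M : 'M[R]_1 => M 0 0) hw; rewrite !mxE.
  by under eq_bigr => l _ do rewrite mxE.
have := @psumr_eq0P _ _ xpredT (fun l => w 0 l * w 0 l) (fun l _ => sqr_ge0 _) e j isT.
by move=> /eqP; rewrite mulf_eq0 orbb => /eqP.
Qed.

Lemma QQt_unit k (Q : 'M[R]_(k, n)) : row_free Q -> Q *m Q^T \in unitmx.
Proof.
move=> hf; rewrite -row_free_unit -kermx_eq0; apply/eqP.
have [B QB] := row_freeP hf.
apply/row_matrixP => i; rewrite row0.
set v := row i (kermx (Q *m Q^T)).
have hv : v *m (Q *m Q^T) = 0 by rewrite /v -row_mul mulmx_ker row0.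
have w0 : v *m Q = 0.
  by apply: sq0; rewrite trmx_mul mulmxA -(mulmxA v) hv mul0mx.
by rewrite -[v]mulmx1 -QB mulmxA w0 mul0mx.
Qed.

Definition ext k (gs : 'I_k -> aff) (g : aff) : 'I_(k + 1) -> aff :=
  fun i => match split i with inl i => gs i | inr _ => g end.

Lemma Bm_ext k (gs : 'I_k -> aff) g : Bm (ext gs g) = col_mx (Bm gs) (g.2^T).
Proof.
apply/matrixP=> i j; rewrite !mxE /ext; case: (split i) => [a|a]; rewrite !mxE //.
by rewrite (ord1 a).
Qed.

Lemma basis_exists (G : aff -> Prop) :
  exists k (gs : 'I_k -> aff), [/\ forall i, G (gs i), row_free (Bm gs) &
    forall g, G g -> exists lam : 'rV[R]_k, g.2^T = lam *m Bm gs].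
Proof.
pose P k := exists gs : 'I_k -> aff, (forall i, G (gs i)) /\ row_free (Bm gs).
have P0 : P 0%N.
  exists (fun _ => (0, 0)); split; first by case.
  by rewrite /row_free -leqn0 rank_leq_row.
have bnd : forall k, P k -> (k <= n)%N.
  by move=> k [gs [_ /eqP <-]]; apply: rank_leq_col.
have [m [[gs [hG hf]] mx]] := max_exists P0 bnd.
exists m, gs; split=> // g Gg; apply/submxP.
case: (boolP (g.2^T <= Bm gs)%MS) => // nsub.
suff : P (m + 1)%N by move/mx; rewrite addn1 ltnn.
exists (ext gs g); split.
  by move=> i; rewrite /ext; case: (split i).
rewrite Bm_ext /row_free; set B := col_mx _ _.
have sAB : (Bm gs <= B)%MS by rewrite -addsmxE addsmxSl.
have nBA : ~~ (B <= Bm gs)%MS by rewrite col_mx_sub submx_refl.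
have lt : (\rank (Bm gs) < \rank B)%N.
  by rewrite (ltn_leqif (mxrank_leqif_sup sAB)) nBA.
rewrite eqn_leq rank_leq_row /=; move: lt; rewrite (eqP hf); lia.
Qed.

Lemma act_delta_entry (g : aff) (i j : 'I_n) :
  (act g (delta_mx j 0) - delta_mx j 0) i 0 = g.1 i j + g.2 i 0 - (i == j)%:R.
Proof. by rewrite /act -colE !mxE eqxx andbT. Qed.

Lemma frac_eq k (D d : R) (L c : 'I_k -> R) : D != 0 ->
  d + \sum_l (D^-1 * L l) * c l = (d * D + \sum_l L l * c l) / D.
Proof.
move=> hD; rewrite mulrDl mulfK // mulr_suml; congr (_ + _).
by apply: eq_bigr => l _; rewrite -mulrA [_ / D]mulrC mulrA.
Qed.

Definition yv (z : 'I_(n + n) -> R) : 'cV[R]_n := \col_j z (lshift n j).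
Definition xv (z : 'I_(n + n) -> R) : 'cV[R]_n := \col_j z (rshift n j).

Lemma yv_pair y x : yv (pair_coords y x) = y.
Proof. by apply/matrixP=> i j; rewrite !mxE /pair_coords split_l (ord1 j). Qed.
Lemma xv_pair y x : xv (pair_coords y x) = x.
Proof. by apply/matrixP=> i j; rewrite !mxE /pair_coords split_r (ord1 j). Qed.

Section Poly.
Variables (k : nat) (gs : 'I_k -> aff).
Local Notation T := {mpoly R[n + n]}.

Definition Qp : 'M[T]_(k, n) := \matrix_(l, j)
  ((\sum_(m < n) ((gs l).1 j m)%:MP * 'X_(rshift n m)) + ((gs l).2 j 0)%:MP
    - 'X_(rshift n j)).
Definition dp : 'rV[T]_n := \row_j ('X_(lshift n j) - 'X_(rshift n j)).
Definition Mp := Qp *m Qp^T.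
Definition qp := \det Mp.
Definition Lp := dp *m Qp^T *m \adj Mp.

Lemma Qp_eval z : map_mx (meval z) Qp = Qm gs (xv z).
Proof.
apply/matrixP=> l j; rewrite !mxE mevalB mevalD mevalC mevalXU rmorph_sum.
congr (_ + _ - _); apply: eq_bigr => m _.
by rewrite rmorphM /= mevalC mevalXU mxE.
Qed.

Lemma dp_eval z : map_mx (meval z) dp = (yv z - xv z)^T.
Proof. by apply/matrixP=> i j; rewrite !mxE mevalB !mevalXU. Qed.

Lemma Mp_eval z : map_mx (meval z) Mp = Qm gs (xv z) *m (Qm gs (xv z))^T.
Proof. by rewrite /Mp map_mxM -map_trmx Qp_eval. Qed.

Lemma qp_eval z : meval z qp = \det (Qm gs (xv z) *m (Qm gs (xv z))^T).
Proof. by rewrite /qp -det_map_mx Mp_eval. Qed.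

Lemma Lp_eval z : map_mx (meval z) Lp =
  (yv z - xv z)^T *m (Qm gs (xv z))^T *m \adj (Qm gs (xv z) *m (Qm gs (xv z))^T).
Proof. by rewrite /Lp !map_mxM -map_trmx map_mx_adj Mp_eval Qp_eval dp_eval. Qed.

End Poly.

End S.

Theorem lemma6p1 (R : realType) (n s : nat) (G : aff R n -> Prop) :
  (s <= n)%N ->
  is_subgroup_Iso s G ->
  zariski_closed G ->
  centralizer_transitive s G ->
  principal_action G.
Proof.
move=> _ _ _ hc; split.
  move=> g x Gg hx.
  have fixall : forall y, act g y = y.
    move=> y; have [h [_ hcom hy]] := hc x y.
    by rewrite -hy -act_comp -hcom // act_comp hx.
  have b0 : g.2 = 0 by have := fixall 0; rewrite /act mulmx0 add0r.
  have A1 : g.1 = 1%:M.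
    apply/matrixP=> i j.
    have := congr1 (fun v : 'cV[R]_n => v i 0) (fixall (delta_mx j 0)).
    by rewrite /act b0 addr0 -colE !mxE /= andbT.
  by case: g {Gg hx fixall} b0 A1 => A b /= -> ->.
have [k [gs [hG hf hlam]]] := basis_exists G.
pose Qx z := Qm gs (xv z).
pose lam z := (yv z - xv z)^T *m (Qx z)^T *m invmx (Qx z *m (Qx z)^T).
pose beta z : aff R n := (1%:M + \sum_i lam z 0 i *: ((gs i).1 - 1%:M),
                          \sum_i lam z 0 i *: (gs i).2).
have Uz : forall z, Qx z *m (Qx z)^T \in unitmx.
  by move=> z; apply: QQt_unit; apply: (Qm_free _ hc hG hf).
have lamE : forall z l, lam z 0 l =
   (\det (Qx z *m (Qx z)^T))^-1 * (map_mx (meval z) (Lp gs)) 0 l.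
  move=> z l; rewrite Lp_eval /lam /invmx Uz -scalemxAr mxE.
  by [].
exists beta; split.
  move=> g x Gg.
  have [mu hmu] := hlam g Gg.
  have hq := comb hc hG Gg hmu.
  set z := pair_coords _ _.
  have lz : lam z = mu.
    rewrite /lam /Qx /z yv_pair xv_pair hq -(mulmxA mu) mulmxK //.
    by have := Uz z; rewrite /Qx /z xv_pair.
  rewrite /beta lz; clear lz z.
  have hb : forall i, g.2 i 0 = \sum_l mu 0 l * (gs l).2 i 0.
    move=> i; have := congr1 (fun M : 'rV[R]_n => M 0 i) hmu.
    by rewrite !mxE; under eq_bigr => l _ do rewrite mxE.
  case: g Gg hmu hq hb => A b Gg hmu hq hb /=; congr pair.
    apply/matrixP=> i j.
    have := congr1 (fun M : 'rV[R]_n => M 0 i) (hq (delta_mx j 0)).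
    rewrite mxE act_delta_entry /= mxE => e0.
    have e : A i j + b i 0 - (i == j)%:R =
        \sum_l mu 0 l * ((gs l).1 i j + (gs l).2 i 0 - (i == j)%:R).
      by rewrite e0; apply: eq_bigr => l _; rewrite /Qm mxE act_delta_entry.
    rewrite hb in e.
    rewrite mxE summxE.
    under eq_bigr => l _ do rewrite !mxE.
    have -> : A i j = \sum_l mu 0 l * ((gs l).1 i j + (gs l).2 i 0 - (i == j)%:R)
       - \sum_l mu 0 l * (gs l).2 i 0 + (i == j)%:R.
      by rewrite -e; ring.
    have -> : \sum_l mu 0 l * ((gs l).1 i j + (gs l).2 i 0 - (i == j)%:R) =
       \sum_l mu 0 l * ((gs l).1 i j - (i == j)%:R) + \sum_l mu 0 l * (gs l).2 i 0.
      by rewrite -big_split; apply: eq_bigr => l _ /=; ring.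
    rewrite [1%:M i j]mxE; ring.
  apply/matrixP=> i j; rewrite (ord1 j) summxE hb.
  by apply: eq_bigr => l _; rewrite mxE.
split.
  move=> i j.
  exists (((i == j)%:R)%:MP * qp gs +
          \sum_l (Lp gs) 0 l * (((gs l).1 i j - (i == j)%:R)%:MP)), (qp gs).
  move=> z _; split.
    by rewrite qp_eval -unitfE -unitmxE; apply: Uz.
  have L1 : (beta z).1 i j = (i == j)%:R +
      \sum_l ((\det (Qx z *m (Qx z)^T))^-1 *
      (map_mx (meval z) (Lp gs)) 0 l) * ((gs l).1 i j - (i == j)%:R).
    rewrite /beta /= mxE summxE; congr (_ + _); first by rewrite mxE.
    apply: eq_bigr => l _; rewrite mxE; congr (_ * _); first exact: lamE.
    by rewrite !mxE.
  have L2 : meval z (((i == j)%:R)%:MP * qp gs +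
          \sum_l (Lp gs) 0 l * (((gs l).1 i j - (i == j)%:R)%:MP)) =
      (i == j)%:R * \det (Qx z *m (Qx z)^T) +
      \sum_l (map_mx (meval z) (Lp gs)) 0 l * ((gs l).1 i j - (i == j)%:R).
    rewrite rmorphD rmorphM /= mevalC qp_eval rmorph_sum /=; congr (_ + _).
    by apply: eq_bigr => l0 _; rewrite rmorphM /= mevalC [map_mx _ _ _ _]mxE.
  rewrite L1 L2 qp_eval.
  by apply: frac_eq; rewrite -unitfE -unitmxE; apply: Uz.
move=> i.
exists (\sum_l (Lp gs) 0 l * (((gs l).2 i 0)%:MP)), (qp gs).
move=> z _; split.
  by rewrite qp_eval -unitfE -unitmxE; apply: Uz.
rewrite /beta /= summxE rmorph_sum /= qp_eval mulr_suml.
apply: eq_bigr => l _; rewrite mxE.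
transitivity (((\det (Qx z *m (Qx z)^T))^-1 * (map_mx (meval z) (Lp gs)) 0 l) *
   (gs l).2 i 0); first by congr (_ * _); exact: lamE.
rewrite rmorphM /= mevalC [map_mx _ _ _ _]mxE.
by rewrite mulrC mulrA mulrAC [_ * (Lp gs 0 l).@[z]]mulrC.
Qed.
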